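(* Let $T$ be a Huffman code tree for $p$ (average length $L_H$), with $P_R\ge 1/2$ its larger root-subtree probability. Then for every $N\ge2$, $\min\{L_H,L^{(\mathrm I)}_N\}=L_H-\delta^{(\mathrm I)}_N(P_R)$ and $\min\{L_H,L^{(\mathrm{II})}\}=L_H-\delta^{(\mathrm{II})}(P_R)$, where $L^{(\mathrm I)}_N$, $L^{(\mathrm{II})}$ are the average code lengths of the Type-I AEDS with $N$ states and the Type-II AEDS built on $T$, and $\delta^{(\mathrm I)}_N(P)=\left[\frac{1-P^{N-1}}{1-P^{N}}P+\frac{1-P^{2^k-N}}{1-P^{N}}(1-P)-k(1-P)\right]_0$ with $k=\lceil\lg N\rceil$, $\delta^{(\mathrm{II})}(P)=\left[\frac{P^3-P^2+2P-1}{(2-P)(1+P+P^2)}\right]_0$, $[u]_0=\max\{u,0\}$. Consequently, if $P_R>(\sqrt5-1)/2\approx0.6180$ then $L^{(\mathrm I)}_2<L_H$, and if $P_R>\omega^{(\mathrm{II})}\approx0.56984$ (the real root of $P^3-P^2+2P-1=0$) then $L^{(\mathrm{II})}<L_H$.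
   Context: Let $\mathcal S$ be a finite alphabet with $|\mathcal S|\ge 2$ and $p=\{p(s)\}$ a probability distribution with $p(s)>0$ (i.i.d. source). $\mathcal B=\{0,1\}^*$, $l(\beta)$ the length of $\beta$, $\lg=\log_2$. An AEDS with finite state set $\mathcal X$ consists of maps $E_{\hat x}:\mathcal S\to\mathcal B$, $F^-_{\hat x}:\mathcal S\to\mathcal X$ ($\hat x\in\mathcal X$) such that for every $x$ the words $E_{\hat x}(s)$ over pairs with $F^-_{\hat x}(s)=x$ are distinct and prefix-free. The state chain moves from $\hat x$ to $F^-_{\hat x}(s)$ with probability $p(s)$; with its stationary distribution $Q$, the average code length is $L=\sum_{\hat x}\sum_s p(s)Q(\hat x)l(E_{\hat x}(s))$. For a code tree $T$ (prefix-free code, codeword $c_T(s)$ of length $l_T(s)\ge1$): $\mathcal S_R,\mathcal S_L$ are the symbols in the right/left root subtree (both nonempty), $P_R=\sum_{\mathcal S_R}p(s)\ge1/2$; $t_R(s)$, $t_L(s)$ denote $c_T(s)$ with its first bit removed. The Huffman code tree is any tree of an optimal (Huffman) prefix code; $L_H$ its average length. Type-I AEDS with $N\ge2$ states $\alpha_1..\alpha_N$ on $T$: with $k=\lceil\lg N\rceil$ and a prefix-free set $\pi_1..\pi_N$ with $l(\pi_j)=k-1$ for $j\le 2^k-N$ and $k$ otherwise: for $s\in\mathcal S_R$, $F^-_{\alpha_j}(s)=\alpha_{j+1}$, $E_{\alpha_j}(s)=t_R(s)$ ($j<N$), $F^-_{\alpha_N}(s)=\alpha_1$, $E_{\alpha_N}(s)=0t_R(s)$;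 for $s\in\mathcal S_L$, $F^-_{\alpha_j}(s)=\alpha_1$, $E_{\alpha_j}(s)=1\pi_jt_L(s)$. Type-II AEDS with states $\alpha_1..\alpha_5$ on $T$ (pairs $(F^-(s),E(s))$): $\alpha_1$: $\mathcal S_R\mapsto(\alpha_3,0t_R)$, $\mathcal S_L\mapsto(\alpha_2,t_L)$; $\alpha_2$: $\mathcal S_R\mapsto(\alpha_3,10t_R)$, $\mathcal S_L\mapsto(\alpha_1,111t_L)$; $\alpha_3$: $\mathcal S_R\mapsto(\alpha_4,t_R)$, $\mathcal S_L\mapsto(\alpha_1,0t_L)$; $\alpha_4$: $\mathcal S_R\mapsto(\alpha_5,t_R)$, $\mathcal S_L\mapsto(\alpha_1,10t_L)$; $\alpha_5$: $\mathcal S_R\mapsto(\alpha_3,11t_R)$, $\mathcal S_L\mapsto(\alpha_1,110t_L)$. *)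

(* Defs.v *)
From HB Require Import structures.
From mathcomp Require Import all_boot all_order all_algebra.
Set Implicit Arguments. Unset Strict Implicit. Unset Printing Implicit Defensive.
Import Order.TTheory GRing.Theory Num.Theory.
Local Open Scope ring_scope.

Section Defs.
Variable R : rcfType.
Variable S : finType.
Variable p : S -> R.

Definition prefix_free (X : finType) (f : X -> seq bool) : Prop :=
  forall x y : X, x != y -> ~~ prefix (f x) (f y).

Definition avg_len (c : S -> seq bool) : R := \sum_(s : S) p s * (size (c s))%:R.

Definition code_tree (c : S -> seq bool) : Prop :=
  prefix_free c /\ (forall s, (0 < size (c s))%N).

Definition huffman_tree (c : S -> seq bool) : Prop :=
  code_tree c /\ forall c' : S -> seq bool, prefix_free c' -> avg_len c <= avg_len c'.

(* symbols in the root subtree entered by bit b *)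
Definition in_sub (c : S -> seq bool) (b : bool) (s : S) : bool := ohead (c s) == Some b.

Definition Psub (c : S -> seq bool) (b : bool) : R := \sum_(s | in_sub c b s) p s.

Definition trans (X : finType) (F : X -> S -> X) (x y : X) : R :=
  \sum_(s | F x s == y) p s.

Definition stationary (X : finType) (F : X -> S -> X) (Q : X -> R) : Prop :=
  [/\ forall x, 0 <= Q x, \sum_(x : X) Q x = 1
    & forall y, Q y = \sum_(x : X) Q x * trans F x y].

Definition aeds_len (X : finType) (E : X -> S -> seq bool) (Q : X -> R) : R :=
  \sum_(x : X) \sum_(s : S) p s * Q x * (size (E x s))%:R.
End Defs.

(* ---------- Type-I AEDS with N states (alpha_{j+1} is index j) ---------- *)
Definition ord0_of (N : nat) (i : 'I_N) : 'I_N :=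
  Ordinal (leq_ltn_trans (leq0n i) (ltn_ord i)).

Definition kI (N : nat) : nat := up_log 2 N.  (* = ceil (lg N) for N >= 2 *)

Definition valid_pi (N : nat) (pi : 'I_N -> seq bool) : Prop :=
  prefix_free pi /\
  forall j : 'I_N, size (pi j) = if (j < 2 ^ kI N - N)%N then (kI N).-1 else kI N.

Definition typeI_F (S : finType) (c : S -> seq bool) (bR : bool) (N : nat)
    (i : 'I_N) (s : S) : 'I_N :=
  if in_sub c bR s then insubd (ord0_of i) i.+1 else ord0_of i.

Definition typeI_E (S : finType) (c : S -> seq bool) (bR : bool) (N : nat)
    (pi : 'I_N -> seq bool) (i : 'I_N) (s : S) : seq bool :=
  if in_sub c bR s then
    (if (i.+1 < N)%N then behead (c s) else false :: behead (c s))
  else true :: pi i ++ behead (c s).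

(* ---------- Type-II AEDS with 5 states (alpha_{j+1} is index j) ---------- *)
Definition typeII_F (S : finType) (c : S -> seq bool) (bR : bool)
    (i : 'I_5) (s : S) : 'I_5 :=
  if in_sub c bR s then
    match val i with 0 => inord 2 | 1 => inord 2 | 2 => inord 3 | 3 => inord 4 | _ => inord 2 end
  else
    match val i with 0 => inord 1 | _ => inord 0 end.

Definition typeII_E (S : finType) (c : S -> seq bool) (bR : bool)
    (i : 'I_5) (s : S) : seq bool :=
  if in_sub c bR s then
    match val i with
    | 0 => false :: behead (c s)
    | 1 => [:: true; false] ++ behead (c s)
    | 2 => behead (c s)
    | 3 => behead (c s)
    | _ => [:: true; true] ++ behead (c s)
    end
  else
    match val i with
    | 0 => behead (c s)
    | 1 => [:: true; true; true] ++ behead (c s)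
    | 2 => false :: behead (c s)
    | 3 => [:: true; false] ++ behead (c s)
    | _ => [:: true; true; false] ++ behead (c s)
    end.

Definition pos0 (R : realDomainType) (u : R) : R := Num.max u 0.

Definition deltaI (R : rcfType) (N : nat) (P : R) : R :=
  let k := kI N in
  pos0 ((1 - P ^+ N.-1) / (1 - P ^+ N) * P
        + (1 - P ^+ (2 ^ k - N)) / (1 - P ^+ N) * (1 - P)
        - k%:R * (1 - P)).

Definition deltaII (R : rcfType) (P : R) : R :=
  pos0 ((P ^+ 3 - P ^+ 2 + 2 * P - 1) / ((2 - P) * (1 + P + P ^+ 2))).

(* Main.v *)
Require Import Defs.
From HB Require Import structures.
From mathcomp Require Import all_boot all_order all_algebra.
From mathcomp Require Import ring lra zify.
Import Order.TTheory GRing.Theory Num.Theory.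
Local Open Scope ring_scope.

Section Gen.
Variable R : rcfType.
Variable S : finType.
Variable p : S -> R.
Variable c : S -> seq bool.
Variable bR : bool.
Hypothesis sum1 : \sum_(s : S) p s = 1.
Local Notation P := (Psub p c bR).

Lemma sum_if (u v : R) :
  \sum_(s : S) p s * (if in_sub c bR s then u else v) = P * u + (1 - P) * v.
Proof.
rewrite (bigID (in_sub c bR)) /=.
have H1 : \sum_(s | ~~ in_sub c bR s) p s = 1 - P.
  by rewrite -sum1 (bigID (in_sub c bR) predT) /= /Psub addrC addrK.
rewrite [X in _ + X](eq_bigr (fun s => p s * v)); last by move=> s Hs; rewrite (negbTE Hs).
rewrite [X in X + _](eq_bigr (fun s => p s * u)); last by move=> s ->.
by rewrite -!big_distrl /= H1 mulrC [_ * v]mulrC.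
Qed.

Lemma trans_split (X : finType) (F : X -> S -> X) (g h : X -> X)
  (HF : forall x s, F x s = if in_sub c bR s then g x else h x) x y :
  trans p F x y = P * (g x == y)%:R + (1 - P) * (h x == y)%:R.
Proof.
rewrite /trans -sum_if big_mkcond /=; apply: eq_bigr => s _.
rewrite HF; case: (in_sub c bR s); case: eqP => _; by rewrite ?mulr1 ?mulr0.
Qed.

Lemma aeds_split (X : finType) (E : X -> S -> seq bool) (a b : X -> nat) Q
  (Hc : forall s, (0 < size (c s))%N)
  (HE : forall x s, size (E x s) = (size (behead (c s)) + if in_sub c bR s then a x else b x)%N)
  (HQ : \sum_(x : X) Q x = 1) :
  aeds_len p E Q = avg_len p c - 1 + \sum_(x : X) Q x * (P * (a x)%:R + (1 - P) * (b x)%:R).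
Proof.
have Hs : forall x, \sum_(s : S) p s * Q x * (size (E x s))%:R
   = Q x * (avg_len p c - 1) + Q x * (P * (a x)%:R + (1 - P) * (b x)%:R).
  move=> x; rewrite -mulrDr -sum_if.
  have -> : avg_len p c - 1 = \sum_(s : S) p s * ((size (c s))%:R - 1).
    rewrite /avg_len -[X in _ - X]sum1 -sumrB; apply: eq_bigr => s _; ring.
  rewrite -big_split big_distrr /=; apply: eq_bigr => s _.
  rewrite HE size_behead natrD -subn1 natrB ?Hc //.
  case: (in_sub c bR s); ring.
rewrite /aeds_len (eq_bigr _ (fun x _ => Hs x)) big_split /= -big_distrl /= HQ mul1r.
by [].
Qed.
End Gen.
Lemma min_pos0 (R : rcfType) (a d : R) : Num.min a (a - d) = a - pos0 d.
Proof.
rewrite /pos0 minEle maxEle.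
case: (lerP a (a - d)) => h1; case: (lerP d 0) => h2; lra.
Qed.

Lemma geom (R : rcfType) (P : R) m : (1 - P) * \sum_(j < m) P ^+ j = 1 - P ^+ m.
Proof.
elim: m => [|m IH]; first by rewrite big_ord0 mulr0 expr0 subrr.
by rewrite big_ord_recr /= mulrDr IH exprS; ring.
Qed.

Lemma sum_cut (R : rcfType) (f : nat -> R) m N : (m <= N)%N ->
  \sum_(j < N) f j * (j < m)%:R = \sum_(j < m) f j.
Proof.
move=> h; rewrite (big_ord_widen N f h) [RHS]big_mkcond /=.
by apply: eq_bigr => j _; case: ifP => _; rewrite ?mulr1 ?mulr0.
Qed.

Lemma sum_last (R : rcfType) (f : nat -> R) n :
  \sum_(j < n.+1) f j * (j == n :> nat)%:R = f n.
Proof.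
rewrite big_ord_recr /= eqxx mulr1 big1 ?add0r // => j _.
by rewrite /= (ltn_eqF (ltn_ord j)) mulr0.
Qed.

Lemma sum_pick (X : finType) (R : rcfType) (Q : X -> R) (i0 : X) :
  \sum_(x : X) Q x * (x == i0)%:R = Q i0.
Proof.
rewrite (bigD1 i0) //= eqxx mulr1 big1 ?addr0 // => x /negbTE ->.
by rewrite mulr0.
Qed.

Section TypeI.
Variable R : rcfType.
Variable S : finType.
Variable p : S -> R.
Variable c : S -> seq bool.
Variable bR : bool.
Hypothesis sum1 : \sum_(s : S) p s = 1.
Local Notation P := (Psub p c bR).
Variable n : nat.

Definition predI (y : 'I_n.+1) : nat := if nat_of_ord y == 0%N then n else (nat_of_ord y).-1.

Lemma predI_le y : (predI y <= n)%N.
Proof. rewrite /predI; case: eqP => // _; apply: leq_trans (leq_pred _) _; rewrite -ltnS; exact: ltn_ord. Qed.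

Lemma gI_eq (x y : 'I_n.+1) :
  (insubd (ord0_of x) x.+1 == y) = (x == inord (predI y) :> 'I_n.+1).
Proof.
rewrite -val_eqE val_insubd -val_eqE /= inordK ?ltnS ?predI_le // /predI.
case: x => u hu; case: y => v hv /=.
case: v hv => [|v] hv /=; case: (ltnP u n) => h1; apply/eqP/eqP; lia.
Qed.

Lemma stat_sumI (Q : 'I_n.+1 -> R) y :
  \sum_(x : 'I_n.+1) Q x * trans p (typeI_F c bR (N:=n.+1)) x y
  = P * Q (inord (predI y)) + (1 - P) * (nat_of_ord y == 0%N)%:R * \sum_(x : 'I_n.+1) Q x.
Proof.
rewrite (eq_bigr (fun x => P * (Q x * (x == inord (predI y) :> 'I_n.+1)%:R)
    + (1 - P) * (nat_of_ord y == 0%N)%:R * Q x)); last first.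
  move=> x _; rewrite (@trans_split R S p c bR sum1 _ _
     (fun x => insubd (ord0_of x) x.+1) (fun x => ord0_of x)) //.
  rewrite gI_eq.
  have -> : (ord0_of x == y) = (nat_of_ord y == 0%N) by rewrite -val_eqE /= eq_sym.
  ring.
by rewrite big_split /= -!big_distrr /= sum_pick.
Qed.

Hypothesis P0 : 0 < P.
Hypothesis P1 : P < 1.
Hypothesis hc : forall s, (0 < size (c s))%N.

Definition dI := 1 - P ^+ n.+1.
Definition qI (j : nat) := P ^+ j * (1 - P) / dI.

Lemma dI_gt0 : 0 < dI.
Proof. rewrite /dI subr_gt0 exprn_ilt1 ?ltW //. Qed.

Lemma dI_ne0 : dI != 0.
Proof. by rewrite gt_eqF // dI_gt0. Qed.

Lemma sum_qI : \sum_(x : 'I_n.+1) qI x = 1.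
Proof.
rewrite /qI -big_distrl -big_distrl /= [_ * (1 - P)]mulrC geom.
by rewrite /dI divff // -/dI dI_ne0.
Qed.

Lemma statI_exists : stationary p (typeI_F c bR (N:=n.+1)) (fun x => qI x).
Proof.
split.
- move=> x; rewrite /qI; apply: divr_ge0; last exact: ltW dI_gt0.
  by apply: mulr_ge0; [apply: exprn_ge0; exact: ltW | move: P1; lra].
- exact: sum_qI.
- move=> y; rewrite stat_sumI sum_qI inordK ?ltnS ?predI_le // /predI.
  case: y => [[|v] hv] /=.
  + rewrite /qI /dI; have h := dI_ne0; rewrite /dI in h.
    rewrite exprS; rewrite exprS in h; field; by [].
  + by rewrite /qI exprS mulr0 mul0r addr0 !mulrA.
Qed.

Lemma statI_unique Q : stationary p (typeI_F c bR (N:=n.+1)) Q ->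
  forall x : 'I_n.+1, Q x = qI x.
Proof.
case=> _ hs hst.
have rec : forall j, (j < n)%N -> Q (inord j.+1) = P * Q (inord j).
  move=> j hj. rewrite {1}hst stat_sumI.
  have hj1 : (j.+1 < n.+1)%N by [].
  rewrite /predI (inordK hj1).
  have -> : (j.+1 == 0%N) = false by [].
  by rewrite mulr0 mul0r addr0.
have cl : forall j, (j <= n)%N -> Q (inord j) = P ^+ j * Q (inord 0).
  elim=> [|j IH] hj; first by rewrite expr0 mul1r.
  rewrite rec // IH; last exact: ltnW.
  by rewrite exprS mulrA.
have allx : forall x : 'I_n.+1, Q x = P ^+ x * Q (inord 0).
  by move=> x; rewrite -{1}(inord_val x) cl // -ltnS.
have h1 : (\sum_(x < n.+1) P ^+ x) * Q (inord 0) = 1.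
  by rewrite big_distrl -hs; apply: eq_bigr => x _; rewrite [RHS]allx.
have h2 : dI * Q (inord 0) = 1 - P by rewrite /dI -geom -mulrA h1 mulr1.
move=> x; rewrite allx /qI -h2; have := dI_ne0; move: (dI) => d hd; by field.
Qed.

Lemma k_facts : (0 < n)%N -> (0 < kI n.+1)%N /\ (2 ^ kI n.+1 - n.+1 <= n.+1)%N.
Proof.
move=> hn; have k0 : (0 < kI n.+1)%N by rewrite /kI up_log_gt0.
split=> //; have h := up_log_gtn (isT : (1 < 2)%N) (hn : (1 < n.+1)%N).
have e : (2 ^ kI n.+1 = 2 * 2 ^ (kI n.+1).-1)%N by rewrite -expnS prednK.
rewrite e; rewrite /kI in e *; lia.
Qed.

Definition innerI (P : R) :=
  (1 - P ^+ n) / (1 - P ^+ n.+1) * P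
  + (1 - P ^+ (2 ^ kI n.+1 - n.+1)) / (1 - P ^+ n.+1) * (1 - P)
  - (kI n.+1)%:R * (1 - P).

Lemma aedsI (hn : (0 < n)%N) (pi : 'I_n.+1 -> seq bool) (vp : valid_pi pi) Q :
  stationary p (typeI_F c bR (N:=n.+1)) Q ->
  aeds_len p (typeI_E c bR pi) Q = avg_len p c - innerI P.
Proof.
move=> st; have hQ := @statI_unique Q st; case: st => _ hs _.
case: vp => _ hpi.
have [k0 km] := k_facts hn.
rewrite (@aeds_split R S p c bR sum1 _ _ (fun x : 'I_n.+1 => nat_of_ord x == n)
   (fun x => (1 + size (pi x))%N) Q hc _ hs); last first.
  move=> x s; rewrite /typeI_E; case: (in_sub c bR s) => /=.
  - case: ifP => h.
    + by rewrite (ltn_eqF (h : (x < n)%N)) addn0.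
    + have -> : (nat_of_ord x == n) = true.
        by have := ltn_ord x; move: h; rewrite ltnS => h; lia.
      by rewrite addn1.
  - by rewrite size_cat; lia.
set k := kI n.+1 in k0 km hpi *.
set m := (2 ^ k - n.+1)%N in km hpi *.
rewrite (eq_bigr (fun x : 'I_n.+1 =>
    P * (1 - P) / dI * (P ^+ x * (nat_of_ord x == n)%:R)
    + (1 - P) * (1 + k)%:R * qI x
    - (1 - P) * (1 - P) / dI * (P ^+ x * (x < m)%:R))); last first.
  move=> x _; rewrite hQ hpi /qI.
  have [k1 ek] : exists k1, k = k1.+1 by exists k.-1; rewrite prednK.
  rewrite ek.
  by case: ifP => _; rewrite /= !natrD; ring.
rewrite sumrB big_split /= -!big_distrr /= sum_qI.
rewrite (@sum_last R (fun j => P ^+ j) n) (@sum_cut R (fun j => P ^+ j) _ _ km).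
have g := @geom R P m.
rewrite /innerI -/k -/m /dI.
have hd := dI_ne0; rewrite /dI in hd.
move: (\sum_(j < m) P ^+ j) g => G g.
rewrite natrD exprS; rewrite exprS in hd.
have -> : (1 - P) * (1 - P) / (1 - P * P ^+ n) * G = (1 - P) / (1 - P * P ^+ n) * ((1 - P) * G).
  by ring.
rewrite g; field; by [].
Qed.

End TypeI.

Definition gn (i : nat) : nat := match i with 0 => 2 | 1 => 2 | 2 => 3 | 3 => 4 | _ => 2 end.
Definition hn (i : nat) : nat := match i with 0 => 1 | _ => 0 end.

Section TypeII.
Variable R : rcfType.
Variable S : finType.
Variable p : S -> R.
Variable c : S -> seq bool.
Variable bR : bool.
Hypothesis sum1 : \sum_(s : S) p s = 1.
Local Notation P := (Psub p c bR).

Lemma sum5 (F : nat -> R) : \sum_(i < 5) F i = F 0%N + F 1%N + F 2%N + F 3%N + F 4%N.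
Proof. by rewrite !big_ord_recl big_ord0 /bump /= addr0 !addrA. Qed.

Definition G5 (Q : 'I_5 -> R) (f : nat -> nat) (j : nat) :=
  \sum_(i < 5) Q (inord i) * (f i == j)%:R.

Lemma G5E Q f j : G5 Q f j = Q (inord 0) * (f 0%N == j)%:R + Q (inord 1) * (f 1%N == j)%:R
  + Q (inord 2) * (f 2%N == j)%:R + Q (inord 3) * (f 3%N == j)%:R + Q (inord 4) * (f 4%N == j)%:R.
Proof. exact: (sum5 (fun i => Q (inord i) * (f i == j)%:R)). Qed.

Lemma statII_eq (Q : 'I_5 -> R) j : (j < 5)%N ->
  \sum_(x : 'I_5) Q x * trans p (typeII_F c bR) x (inord j)
  = P * G5 Q gn j + (1 - P) * G5 Q hn j.
Proof.
move=> hj; rewrite /G5.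
rewrite !big_distrr -big_split /=; apply: eq_bigr => x _.
rewrite (@trans_split R S p c bR sum1 _ _
  (fun i : 'I_5 => match val i with 0 => inord 2 | 1 => inord 2 | 2 => inord 3 | 3 => inord 4 | _ => inord 2 end)
  (fun i : 'I_5 => match val i with 0 => inord 1 | _ => inord 0 end)) //.
rewrite inord_val -!val_eqE.
case: x => [[|[|[|[|[|x]]]]] hx] //=; rewrite !inordK //; ring.
Qed.

Hypothesis P0 : 0 < P.
Hypothesis P1 : P < 1.
Hypothesis hc : forall s, (0 < size (c s))%N.

Lemma fixlin (a b x : R) : x = b + a * x -> x * (1 - a) = b.
Proof.
move=> h; transitivity (x - (b + a * x) + b); first ring.
by rewrite -h subrr add0r.
Qed.

Definition D2 := 1 + P + P ^+ 2.
Definition qv (i : nat) : R :=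
  match i with
  | 0 => (1 - P) / (2 - P)
  | 1 => (1 - P) ^+ 2 / (2 - P)
  | 2 => P / D2
  | 3 => P ^+ 2 / D2
  | _ => P ^+ 3 / D2
  end.

Lemma D1_gt0 : 0 < 2 - P.
Proof. by move: P1; lra. Qed.
Lemma D2_gt0 : 0 < D2.
Proof. rewrite /D2; have h2 : 0 <= P ^+ 2 by exact: sqr_ge0. move: P0 h2; lra. Qed.

Lemma sumQ5 (Q : 'I_5 -> R) : \sum_(x : 'I_5) Q x =
  Q (inord 0) + Q (inord 1) + Q (inord 2) + Q (inord 3) + Q (inord 4).
Proof.
rewrite -(sum5 (fun i => Q (inord i))); apply: eq_bigr => x _; by rewrite inord_val.
Qed.

Lemma statII_exists : stationary p (typeII_F c bR) (fun x => qv x).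
Proof.
have d1 := D1_gt0; have d2 := D2_gt0.
have hd1 : 2 - P != 0 by rewrite gt_eqF.
have hd2 : D2 != 0 by rewrite gt_eqF.
split.
- move=> [[|[|[|[|[|x]]]]] hx] //=; (apply: divr_ge0; last exact: ltW);
    first [exact: sqr_ge0 | exact: (exprn_ge0 _ (ltW P0)) | exact: ltW P0 | (move: P1; lra)].
- rewrite sumQ5 !inordK //= /D2; rewrite /D2 in hd2; field.
  by rewrite hd1 hd2.
- move=> y; rewrite -(inord_val y) statII_eq; last exact: ltn_ord.
  rewrite !G5E !inordK ?ltn_ord //=.
  case: y => [[|[|[|[|[|y]]]]] hy] //=; rewrite /D2; rewrite /D2 in hd2; field;
    by rewrite ?hd1 ?hd2.
Qed.

Lemma statII_unique Q : stationary p (typeII_F c bR) Q ->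
  forall i, (i < 5)%N -> Q (inord i) = qv i.
Proof.
case=> _ hs hst.
have d1 := D1_gt0; have d2 := D2_gt0.
have hd1 : 2 - P != 0 by rewrite gt_eqF.
have hd2 : D2 != 0 by rewrite gt_eqF.
have e : forall j, (j < 5)%N -> Q (inord j) = P * G5 Q gn j + (1 - P) * G5 Q hn j.
  by move=> j hj; rewrite {1}hst statII_eq.
have e0 := e 0%N isT; have e1 := e 1%N isT; have e2 := e 2%N isT.
have e3 := e 3%N isT; have e4 := e 4%N isT.
rewrite !G5E /= in e0 e1 e2 e3 e4.
rewrite sumQ5 in hs.
move E0 : (Q (inord 0)) e0 e1 e2 e3 e4 hs => q0 e0 e1 e2 e3 e4 hs.
move E1 : (Q (inord 1)) e0 e1 e2 e3 e4 hs => q1 e0 e1 e2 e3 e4 hs.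
move E2 : (Q (inord 2)) e0 e1 e2 e3 e4 hs => q2 e0 e1 e2 e3 e4 hs.
move E3 : (Q (inord 3)) e0 e1 e2 e3 e4 hs => q3 e0 e1 e2 e3 e4 hs.
move E4 : (Q (inord 4)) e0 e1 e2 e3 e4 hs => q4 e0 e1 e2 e3 e4 hs.
have q1eq : q1 = 1 - q0 - q2 - q3 - q4 by move: hs; lra.
have e0' : q0 = (1 - P) + (P - 1) * q0 by rewrite {1}e0 q1eq; ring.
have f0 := fixlin _ _ _ e0'.
have h0 : q0 = (1 - P) / (2 - P).
  by rewrite -f0 (_ : 1 - (P - 1) = 2 - P) ?mulfK //; ring.
have h1 : q1 = (1 - P) ^+ 2 / (2 - P) by rewrite {1}e1 h0; field.
have e2' : q2 = P * (q0 + q1) + P ^+ 3 * q2.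
  by rewrite {1}e2 e4 e3; ring.
have f2 := fixlin _ _ _ e2'.
have p3 : 1 - P ^+ 3 != 0.
  by rewrite subr_eq0 eq_sym lt_eqF // exprn_ilt1 // ltW.
have h2 : q2 = P / D2.
  rewrite -[q2](mulfK p3) f2 h0 h1 /D2; rewrite /D2 in hd2; field.
  by rewrite hd1 hd2 p3.
have h3 : q3 = P ^+ 2 / D2 by rewrite {1}e3 h2; field.
have h4 : q4 = P ^+ 3 / D2 by rewrite {1}e4 h3; field.
by case=> [|[|[|[|[|i]]]]] //= _; rewrite ?E0 ?E1 ?E2 ?E3 ?E4.
Qed.


Definition an (i : nat) : nat := match i with 0 => 1 | 1 => 2 | 2 => 0 | 3 => 0 | _ => 2 end.
Definition bn (i : nat) : nat := match i with 0 => 0 | 1 => 3 | 2 => 1 | 3 => 2 | _ => 3 end.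

Definition innerII (P : R) :=
  (P ^+ 3 - P ^+ 2 + 2 * P - 1) / ((2 - P) * (1 + P + P ^+ 2)).

Lemma aedsII Q : stationary p (typeII_F c bR) Q ->
  aeds_len p (typeII_E c bR) Q = avg_len p c - innerII P.
Proof.
move=> st; have hQ := @statII_unique Q st; case: st => _ hs _.
have d1 := D1_gt0; have d2 := D2_gt0.
have hd1 : 2 - P != 0 by rewrite gt_eqF.
have hd2 : D2 != 0 by rewrite gt_eqF.
rewrite (@aeds_split R S p c bR sum1 _ _ (fun x : 'I_5 => an x)
   (fun x : 'I_5 => bn x) Q hc _ hs); last first.
  move=> x s; rewrite /typeII_E; case: x => [[|[|[|[|[|x]]]]] hx] //=;
    case: (in_sub c bR s) => /=; rewrite ?size_cat /=; lia.
pose F := fun i : nat => Q (inord i) * (P * (an i)%:R + (1 - P) * (bn i)%:R).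
rewrite (eq_bigr (fun x : 'I_5 => F x)); last by move=> x _; rewrite /F inord_val.
rewrite (sum5 F) /F /= !hQ // /qv /innerII.
rewrite /D2; rewrite /D2 in hd2; field; by rewrite hd1 hd2.
Qed.
End TypeII.

Lemma notall (R : rcfType) (S : finType) (p : S -> R) (c : S -> seq bool) bR :
  (0 < #|S|)%N -> (forall s, 0 < p s) -> huffman_tree p c -> exists s, ~~ in_sub c bR s.
Proof.
move=> hS hp [[pf hc] opt].
case: (boolP [exists s, ~~ in_sub c bR s]) => [/existsP //|/existsPn h].
exfalso.
have ec : forall s, c s = bR :: behead (c s).
  move=> s; have := h s; rewrite negbK /in_sub.
  by case: (c s) => [|b t] //= /eqP [->].
have pf' : prefix_free (fun s => behead (c s)).
  by move=> x y hxy; have := pf x y hxy; rewrite (ec x) (ec y) prefix_cons eqxx.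
have := opt _ pf'.
have -> : avg_len p c = avg_len p (fun s => behead (c s)) + \sum_s p s.
  rewrite /avg_len -big_split /=; apply: eq_bigr => s _.
  by rewrite {1}(ec s) /= -addn1 natrD mulrDr mulr1.
have : 0 < \sum_s p s.
  have [s0 _] : exists s0, s0 \in S := card_gt0P hS.
  rewrite (bigD1 s0) //=; apply: ltr_pwDl; first exact: hp.
  by apply: sumr_ge0 => i _; exact: ltW.
move=> hpos hle.
have : avg_len p (fun s => behead (c s)) + \sum_s p s <= avg_len p (fun s => behead (c s)) := hle.
by rewrite gerDl leNgt hpos.
Qed.

Lemma P_lt1 (R : rcfType) (S : finType) (p : S -> R) (c : S -> seq bool) bR :
  (0 < #|S|)%N -> (forall s, 0 < p s) -> \sum_s p s = 1 -> huffman_tree p c ->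
  Psub p c bR < 1.
Proof.
move=> hS hp sum1 hh; have [s0 hs0] := @notall R S p c bR hS hp hh.
have H1 : \sum_(s | ~~ in_sub c bR s) p s = 1 - Psub p c bR.
  by rewrite -sum1 (bigID (in_sub c bR) predT) /= /Psub addrC addrK.
have : 0 < \sum_(s | ~~ in_sub c bR s) p s.
  rewrite (bigD1 s0) //=; apply: ltr_pwDl; first exact: hp.
  by apply: sumr_ge0 => i _; exact: ltW.
rewrite H1 subr_gt0 //.
Qed.

Theorem corollary1 (R : rcfType) (S : finType) (p : S -> R) (c : S -> seq bool)
    (bR : bool) :
  (1 < #|S|)%N ->
  (forall s, 0 < p s) -> \sum_(s : S) p s = 1 ->
  huffman_tree p c ->
  1 / 2 <= Psub p c bR ->
  [/\ (forall (N : nat) (pi : 'I_N -> seq bool), (2 <= N)%N -> valid_pi pi ->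
         (exists Q, stationary p (typeI_F c bR (N:=N)) Q) /\
         (forall Q, stationary p (typeI_F c bR (N:=N)) Q ->
            Num.min (avg_len p c) (aeds_len p (typeI_E c bR pi) Q)
            = avg_len p c - deltaI N (Psub p c bR))),
      (exists Q, stationary p (typeII_F c bR) Q) /\
      (forall Q, stationary p (typeII_F c bR) Q ->
         Num.min (avg_len p c) (aeds_len p (typeII_E c bR) Q)
         = avg_len p c - deltaII (Psub p c bR)),
      (forall pi : 'I_2 -> seq bool, valid_pi pi ->
         (Num.sqrt 5 - 1) / 2 < Psub p c bR ->
         forall Q, stationary p (typeI_F c bR (N:=2)) Q ->
         aeds_len p (typeI_E c bR pi) Q < avg_len p c)
    & (forall w : R, w ^+ 3 - w ^+ 2 + 2 * w - 1 = 0 -> w < Psub p c bR ->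
         forall Q, stationary p (typeII_F c bR) Q ->
         aeds_len p (typeII_E c bR) Q < avg_len p c)].
Proof.
move=> hS hp sum1 hh hP.
have hc : forall s, (0 < size (c s))%N by case: hh => [[_ ?] _].
have P0 : 0 < Psub p c bR by move: hP; lra.
have P1 : Psub p c bR < 1.
  by apply: (@P_lt1 R S p c bR) => //; apply: ltn_trans hS.
split.
- move=> [|[|n]] pi // _ vp; split.
    by exists (fun x : 'I_n.+2 => @qI R S p c bR n.+1 x); exact: (@statI_exists R S p c bR sum1 n.+1 P0 P1).
  by move=> Q st; rewrite (@aedsI R S p c bR sum1 n.+1 P0 P1 hc isT pi vp Q st) min_pos0.
- split; first by exists (fun x : 'I_5 => @qv R S p c bR x); exact: (@statII_exists R S p c bR sum1 P0 P1).
  by move=> Q st; rewrite (@aedsII R S p c bR sum1 P0 P1 hc Q st) min_pos0.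
- move=> pi vp hlt Q st; rewrite (@aedsI R S p c bR sum1 1 P0 P1 hc isT pi vp Q st).
  suff h : 0 < innerI R 1 (Psub p c bR) by move: h; lra.
  move: hlt P0 P1; move: (Psub p c bR) => P hlt P0 P1.
  have kI2 : kI 2 = 1%N by rewrite /kI up_lognn.
  have e : innerI R 1 P = (P ^+ 2 + P - 1) / (1 + P).
    rewrite /innerI kI2 (_ : (2 ^ 1 - 2 = 0)%N) // expr0 expr1 subrr mul0r mul0r addr0.
    have h1 : 1 - P ^+ 2 != 0.
      by rewrite subr_eq0 eq_sym lt_eqF // exprn_ilt1 // ltW.
    have h2 : 1 + P != 0 by rewrite gt_eqF //; lra.
    field; by rewrite h1 h2.
  rewrite e; apply: divr_gt0; last by lra.
  have hr0 := sqrtr_ge0 (5 : R).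
  have hr2 : Num.sqrt (5 : R) ^+ 2 = 5 by rewrite sqr_sqrtr // ler0n.
  move: hr0 hr2 hlt; move: (Num.sqrt (5 : R)) => r hr0 hr2 hlt.
  have ha : 0 < 2 * P + 1 - r by lra.
  have hb : 0 < 2 * P + 1 + r by lra.
  have := mulr_gt0 ha hb.
  have -> : (2 * P + 1 - r) * (2 * P + 1 + r) = 4 * (P ^+ 2 + P - 1) + (5 - r ^+ 2) by ring.
  rewrite hr2 subrr addr0; lra.
- move=> w hw hwP Q st; rewrite (@aedsII R S p c bR sum1 P0 P1 hc Q st).
  suff h : 0 < innerII R (Psub p c bR) by move: h; lra.
  move: hwP P0 P1; move: (Psub p c bR) => P hwP P0 P1.
  rewrite /innerII; apply: divr_gt0; last first.
    apply: mulr_gt0; first lra.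
    have := sqr_ge0 P; lra.
  have hq : 0 < P ^+ 2 + P * w + w ^+ 2 - P - w + 2.
    have s1 := sqr_ge0 (P + w / 2 - 1 / 2).
    have s2 := sqr_ge0 (w - 1 / 3).
    have -> : P ^+ 2 + P * w + w ^+ 2 - P - w + 2
       = (P + w / 2 - 1 / 2) ^+ 2 + 3 / 4 * (w - 1 / 3) ^+ 2 + 5 / 3 by field.
    lra.
  have := mulr_gt0 (_ : 0 < P - w) hq.
  have -> : (P - w) * (P ^+ 2 + P * w + w ^+ 2 - P - w + 2)
     = (P ^+ 3 - P ^+ 2 + 2 * P - 1) - (w ^+ 3 - w ^+ 2 + 2 * w - 1) by ring.
  rewrite hw subr0; apply; lra.
Qed.
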